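(* For every integer $n\ge 3$, $\Delta_n>0$; that is, Bob is strictly more likely than Alice to win the game with $n$ flips. Equivalently, the coefficient of $t^n$ in $f(t)=\frac12\big((1-t)(1-2t)(2t^2+t+1)\big)^{-1/2}-\frac12(1-t)^{-1}$ is strictly positive for all $n\ge3$.
   Context: A fair coin is flipped $n$ times, producing a sequence $x_1,\dots,x_n\in\{H,T\}$ of independent uniformly random outcomes. Alice's score is the number of indices $i\in\{1,\dots,n-1\}$ with $(x_i,x_{i+1})=(H,H)$; Bob's score is the number of indices $i\in\{1,\dots,n-1\}$ with $(x_i,x_{i+1})=(H,T)$. Let $P_n(\mathrm{Bob})$ be the probability that Bob's score is strictly larger than Alice's, $P_n(\mathrm{Alice})$ the probability that Alice's score is strictly larger than Bob's, and $\Delta_n=P_n(\mathrm{Bob})-P_n(\mathrm{Alice})$. The square root is the branch equal to $1$ at $t=0$. *)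

(* Defs.v *)
From mathcomp Require Import all_boot all_order all_algebra.
Set Implicit Arguments. Unset Strict Implicit. Unset Printing Implicit Defensive.
Import Order.TTheory GRing.Theory Num.Theory.

(* A sequence of n coin flips: x i = true means H, false means T. *)
Definition flips (n : nat) := {ffun 'I_n -> bool}.

(* value of x at a natural index k (default false if k >= n; only used for k < n) *)
Definition at_idx (n : nat) (x : {ffun 'I_n -> bool}) (k : nat) : bool :=
  match insub k with Some j => x j | None => false end.

Definition pair_count (n : nat) (a b : bool) (x : {ffun 'I_n -> bool}) : nat :=
  #|[set i : 'I_n | (i.+1 < n) && (x i == a) && (at_idx x i.+1 == b)]|.

Definition alice_score n (x : {ffun 'I_n -> bool}) := pair_count true true x.
Definition bob_score n (x : {ffun 'I_n -> bool}) := pair_count true false x.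

Definition P_bob (n : nat) : rat :=
  #|[set x : {ffun 'I_n -> bool} | alice_score x < bob_score x]|%:R / (2 ^ n)%:R.
Definition P_alice (n : nat) : rat :=
  #|[set x : {ffun 'I_n -> bool} | bob_score x < alice_score x]|%:R / (2 ^ n)%:R.

Local Open Scope ring_scope.
Definition Delta (n : nat) : rat := P_bob n - P_alice n.

(* Main.v *)
Require Import Defs.
From mathcomp Require Import all_boot all_order all_algebra.
From mathcomp Require Import zify.
Set Implicit Arguments. Unset Strict Implicit. Unset Printing Implicit Defensive.
Import Order.TTheory GRing.Theory Num.Theory.

Lemma card_count (T : finType) (R : pred T) : #|[set x | R x]| = count R (enum T).
Proof.
rewrite cardsE cardE /enum_mem size_filter -enumT.
have -> : [seq x <- enum T | mem T x] = enum T by apply/all_filterP/allP.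
by [].
Qed.

Lemma inj_cons (b : bool) : injective (cons b). Proof. by move=> x y [->]. Qed.

Fixpoint allseq n : seq (seq bool) :=
  if n is m.+1 then map (cons true) (allseq m) ++ map (cons false) (allseq m) else [:: [::]].
Definition hs (s : seq bool) := count id s.
Fixpoint ks (s : seq bool) : nat := if s is y :: r then ks r + (y && ~~ head false r) else 0.
Definition es (s : seq bool) := head false s.

Lemma inv_ek s : es s <= ks s.
Proof. elim: s => [|y r IH] //=; move: IH; rewrite /es /=; case: y; case: (head false r) => /=; lia. Qed.
Lemma inv_kh s : ks s <= hs s.
Proof. elim: s => [|y r IH] //=; rewrite /hs /= -/(hs r); case: y => /=; lia. Qed.
Lemma inv_hn s : hs s <= size s.
Proof. exact: count_size. Qed.

Lemma count_allS (P : pred (seq bool)) n :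
  count P (allseq n.+1) = count (fun s => P (true :: s)) (allseq n) + count (fun s => P (false :: s)) (allseq n).
Proof. by rewrite /= count_cat !count_map. Qed.

Lemma mem_allseq n s : (s \in allseq n) = (size s == n).
Proof.
elim: n s => [|n IH] s; first by case: s.
case: s => [|y s] /=.
  by rewrite mem_cat; apply/negbTE; apply/orP => [[]] /mapP[t _].
rewrite mem_cat; case: y.
- rewrite (mem_map (@inj_cons true)) IH.
  rewrite eqSS; case: (size s == n) => //=; by apply/negbTE/mapP => [[t _]].
- rewrite (mem_map (@inj_cons false)) IH.
  rewrite eqSS orbC; case: (size s == n) => //=; by apply/negbTE/mapP => [[t _]].
Qed.

Lemma uniq_allseq n : uniq (allseq n).
Proof.
elim: n => [|n IH] //=; rewrite cat_uniq !(map_inj_uniq (@inj_cons _)) IH /=.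
rewrite andbT; apply/hasPn => s /mapP[t _ ->]; apply/mapP => [[u _]] //.
Qed.

Lemma count_eq_add (T : Type) (P P1 P2 : pred T) (l : seq T) :
  (forall s, P s = P1 s + P2 s :> nat) -> count P l = count P1 l + count P2 l.
Proof. move=> H; elim: l => [|x l IH] //=; rewrite IH H; lia. Qed.

Definition pos s := hs s + es s < ks s * 2.
Definition neg s := ks s * 2 < hs s + es s.
Definition Aq s := ~~ es s && (ks s * 2 == hs s).
Definition Bm s := es s && (ks s * 2 == hs s).
Definition Bp s := es s && (ks s * 2 == hs s + 2).

Lemma hsC y s : hs (y :: s) = y + hs s. Proof. by []. Qed.

Lemma R1_pt s : (pos (true :: s) + pos (false :: s) + 2 * neg s + Bp s
   = 2 * pos s + neg (true :: s) + neg (false :: s) + Bm s)%N.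
Proof.
rewrite /pos /neg /Bp /Bm /es /=; case: (head false s) => /=; lia.
Qed.

Lemma R1 n : (count pos (allseq n.+1) + 2 * count neg (allseq n) + count Bp (allseq n)
   = 2 * count pos (allseq n) + count neg (allseq n.+1) + count Bm (allseq n))%N.
Proof.
rewrite !count_allS.
elim: (allseq n) => [|x l IH] //=. move: (R1_pt x); lia.
Qed.

Lemma R2 n : count Aq (allseq n.+1) = (count Aq (allseq n) + count Bm (allseq n))%N.
Proof.
rewrite count_allS. elim: (allseq n) => [|x l IH] //=.
move: IH; rewrite /Aq /Bm /es /=; case: (head false x) => /=; lia.
Qed.

Definition Nc n h k (e : bool) :=
  count (fun s => (hs s == h) && (ks s == k) && (es s == e)) (allseq n).
Definition F n h k (e : bool) : nat :=
  match h, k with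
  | 0, 0 => ~~ e
  | h'.+1, k'.+1 => if e then (h' < n) * ('C(h', k') * 'C(n - h'.+1, k'))
                    else 'C(h', k') * 'C(n - h'.+1, k'.+1)
  | _, _ => 0 end.

Lemma NR0 n h k : Nc n.+1 h k false = (Nc n h k false + Nc n h k true)%N.
Proof.
rewrite /Nc count_allS; elim: (allseq n) => [|x l IH] //=.
move: IH; rewrite /es /=; case: (head false x) => /=; lia.
Qed.
Lemma NR1 n k : Nc n.+1 0 k true = 0.
Proof.
rewrite /Nc count_allS; elim: (allseq n) => [|x l IH] //=.
move: IH; rewrite /es /=; case: (head false x) => /=; lia.
Qed.
Lemma NR2 n h k : Nc n.+1 h.+1 k true =
   (Nc n h k true + (if k is k'.+1 then Nc n h k' false else 0))%N.
Proof.
rewrite /Nc count_allS; case: k => [|k]; elim: (allseq n) => [|x l IH] //=;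
move: IH; rewrite /es /=; case: (head false x) => /=; lia.
Qed.

Lemma NF n h k e : Nc n h k e = F n h k e.
Proof.
elim: n h k e => [|n IH] h k e.
  by rewrite /Nc /=; case: h => [|h]; case: k => [|k]; case: e => //=; rewrite bin0n ?muln0.
case: e.
- case: h => [|h]; first by rewrite NR1; case: k.
  rewrite NR2; case: k => [|k]; rewrite /= !IH.
    by case: h.
  case: h => [|h] /=.
    by case: k => [|k] //=; rewrite ?bin0n ?muln0 //= subn1 /= bin0 muln1.
  case: k => [|k] /=.
    by rewrite !bin0 !muln1 addn0.
  have -> : n.+1 - h.+2 = n - h.+1 by lia.
  rewrite ltnS; case: (ltnP h n) => Hh /=.
    by rewrite binS !mul1n mulnDl.
  have -> : n - h.+1 = 0 by lia.
  by rewrite !bin0n !muln0.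
- rewrite NR0 !IH; case: h => [|h]; case: k => [|k] //=.
  have -> : n.+1 - h.+1 = n - h by lia.
  case: (ltnP h n) => Hh /=.
    have -> : n - h = (n - h.+1).+1 by lia.
    by rewrite binS mul1n mulnDr addnC.
  have -> : n - h.+1 = 0 by lia.
  have -> : n - h = 0 by lia.
  by rewrite !bin0n !muln0.
Qed.

Lemma count_big (l : seq (seq bool)) (P : pred (seq bool)) (Q : nat -> pred (seq bool)) m :
  (forall s, s \in l -> P s = \sum_(j < m) Q j s :> nat) ->
  count P l = \sum_(j < m) count (Q j) l.
Proof.
elim: l => [|x l IH] H /=; first by rewrite big1.
rewrite big_split /= -IH; last by move=> s Hs; apply: H; rewrite inE Hs orbT.
by rewrite H // inE eqxx.
Qed.

Lemma select m k (f : nat -> bool) : k < m -> \sum_(j < m) ((k == j) && f j) = f k :> nat.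
Proof.
elim: m => [//|m IH] Hk; rewrite big_ord_recr /=.
case: (ltnP k m) => Hkm.
  by rewrite IH // (_ : (k == m) = false) ?addn0 //; apply/negbTE; rewrite neq_ltn Hkm.
have Ek : k = m by lia.
rewrite big1 ?Ek ?eqxx //= => j _; rewrite (_ : (m == j) = false) //.
by apply/negbTE; rewrite neq_ltn ltn_ord orbT.
Qed.

Lemma Aq_dec n : count Aq (allseq n) = \sum_(j < n.+1) Nc n j.*2 j false.
Proof.
apply: (count_big (Q := fun j s => (hs s == j.*2) && (ks s == j) && (es s == false))) => s; rewrite mem_allseq => /eqP Hs.
have Hk : ks s < n.+1 by rewrite ltnS (leq_trans (inv_kh s)) // -Hs inv_hn.
rewrite (eq_bigr (fun j : 'I_n.+1 => ((ks s == j) && ((hs s == (j : nat).*2) && (es s == false))) : nat)); last first.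
  by move=> j _; case: (ks s == j); rewrite ?andbT ?andbF.
rewrite (select (fun j => (hs s == j.*2) && (es s == false))) //.
rewrite /Aq; case: (es s) => /=; rewrite ?andbF ?andbT // -muln2 eq_sym. by apply/eqP/eqP.
Qed.

Lemma Bp_dec n : count Bp (allseq n) = \sum_(j < n.+1) Nc n j.*2 j.+1 true.
Proof.
apply: (count_big (Q := fun j s => (hs s == j.*2) && (ks s == j.+1) && (es s == true))) => s; rewrite mem_allseq => /eqP Hs.
have Hk : ks s <= n by rewrite (leq_trans (inv_kh s)) // -Hs inv_hn.
have He := inv_ek s.
rewrite /Bp; case E: (es s) => /=; last first.
  by rewrite big1 // => j _; rewrite andbF.
move: He Hk; rewrite E; case Ek: (ks s) => [//|k] _ Hk.
rewrite (eq_bigr (fun j : 'I_n.+1 => ((k == j) && (hs s == (j : nat).*2)) : nat)); last first.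
  by move=> j _; rewrite eqSS andbT; case: (k == j); rewrite ?andbT ?andbF.
rewrite (select (fun j => (hs s == j.*2))) //; lia.
Qed.

Lemma R3 n : (count Bp (allseq n)).+1 = count Aq (allseq n).
Proof.
rewrite Aq_dec Bp_dec big_ord_recl [in RHS]big_ord_recl !NF /= add1n; congr (_.+1).
apply: eq_bigr => j _; rewrite /bump /= !add1n NF /= doubleS /=.
rewrite !NF /=.
have Hb : 'C(j.*2.+1, j.+1) = 'C(j.*2.+1, j).
  rewrite -bin_sub; last by rewrite -addnn; lia.
  by rewrite (_ : j.*2.+1 - j.+1 = j) // -addnn; lia.
rewrite Hb; case: (ltnP j.*2.+1 n) => H /=; first by rewrite mul1n.
rewrite (_ : n - j.*2.+2 = 0); last by move: H; rewrite -addnn; lia.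
by rewrite !bin0n !muln0.
Qed.

Lemma main_seq n : 0 < n ->
  (count pos (allseq n) + 1 = count neg (allseq n) + count Aq (allseq n))%N.
Proof.
elim: n => [//|n IH] _.
case: n IH => [|n] IH; first by [].
have := IH erefl; have := R1 n.+1; have := R2 n.+1; have := R3 n.+1; lia.
Qed.

Lemma A_ge2 n : 3 <= n -> 2 <= count Aq (allseq n).
Proof.
elim: n => [//|n IH] Hn.
case: (ltnP 3 n.+1) => H; last by have -> : n = 2 by lia.
rewrite R2; apply: leq_trans (leq_addr _ _); apply: IH; lia.
Qed.

Lemma seq_ineq n : 3 <= n -> count neg (allseq n) < count pos (allseq n).
Proof. move=> Hn; have := main_seq (n := n); have := A_ge2 Hn; lia. Qed.

Fixpoint pc (a b : bool) (s : seq bool) : nat :=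
  if s is x :: r then ((if r is y :: _ then (x == a) && (y == b) else false) : nat) + pc a b r else 0.

Lemma pc_sum a b s : pc a b s =
  \sum_(i < size s) ((i.+1 < size s) && (nth false s i == a) && (nth false s i.+1 == b)).
Proof.
elim: s => [|x r IH]; first by rewrite big_ord0.
rewrite /= big_ord_recl /= IH; congr (_ + _).
by case: r {IH}.
Qed.

Definition fw n (x : {ffun 'I_n -> bool}) := mkseq (at_idx x) n.

Lemma at_idxE n (x : {ffun 'I_n -> bool}) (i : 'I_n) : at_idx x i = x i.
Proof. by rewrite /at_idx valK. Qed.

Lemma pair_pc a b n (x : {ffun 'I_n -> bool}) : pair_count a b x = pc a b (fw x).
Proof.
rewrite /pair_count pc_sum /fw size_mkseq -sum1_card big_mkcond /=.
apply: eq_bigr => i _; rewrite inE.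
rewrite nth_mkseq // at_idxE.
case H: (i.+1 < n) => //=.
by rewrite nth_mkseq.
Qed.

Lemma pc_rcons2 a b t z y :
  pc a b (rcons (rcons t z) y) = (pc a b (rcons t z) + ((z == a) && (y == b)))%N.
Proof.
elim: t => [|x t IH] /=; first by rewrite !addn0 add0n.
by rewrite IH addnA; case: t IH.
Qed.

Lemma pc_rev r : (pc true true (rev r) + ks r = hs r)%N /\ (pc true false (rev r) + es r = ks r)%N.
Proof.
elim: r => [|y r IH] //; case: r IH => [|z r] IH; first by case: y.
rewrite !rev_cons !pc_rcons2 -!rev_cons.
move: IH; rewrite /es /=.
case: y; case: z => /=; lia.
Qed.

Lemma fw_inj n : injective (@fw n).
Proof.
move=> x y E; apply/ffunP => i.
have := congr1 (fun s => nth false s i) E; rewrite /fw /= !nth_mkseq //.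
by rewrite !at_idxE.
Qed.

Lemma card_link n (R : pred (seq bool)) :
  #|[set x : {ffun 'I_n -> bool} | R (fw x)]| = count R (allseq n).
Proof.
rewrite card_count -(count_map (@fw n) R).
apply/permP; apply: uniq_perm.
- by rewrite (map_inj_uniq (@fw_inj n)) enum_uniq.
- exact: uniq_allseq.
move=> s; rewrite mem_allseq; apply/mapP/idP.
  by move=> [x _ ->]; rewrite /fw size_mkseq.
move=> /eqP Hs; exists [ffun i : 'I_n => nth false s i]; first by rewrite mem_enum.
apply: (@eq_from_nth _ false); first by rewrite /fw size_mkseq.
move=> i; rewrite Hs => Hi; rewrite /fw nth_mkseq // /at_idx insubT /= ffunE //.
Qed.

Lemma count_rev n (Q : pred (seq bool)) : count (fun s => Q (rev s)) (allseq n) = count Q (allseq n).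
Proof.
rewrite -(count_map rev Q); apply/permP; apply: uniq_perm.
- by rewrite (map_inj_uniq (can_inj (@revK _))) uniq_allseq.
- exact: uniq_allseq.
move=> s; rewrite mem_allseq; apply/mapP/idP.
  by move=> [t]; rewrite mem_allseq => Ht ->; rewrite size_rev.
by move=> Hs; exists (rev s); rewrite ?revK // mem_allseq size_rev.
Qed.

Lemma pos_link n : #|[set x : {ffun 'I_n -> bool} | alice_score x < bob_score x]| = count pos (allseq n).
Proof.
rewrite -count_rev -card_link; apply: eq_card => x; rewrite !inE /alice_score /bob_score !pair_pc.
move: (pc_rev (rev (fw x))); rewrite revK /pos => -[].
move: (inv_ek (rev (fw x))) (inv_kh (rev (fw x))); lia.
Qed.

Lemma neg_link n : #|[set x : {ffun 'I_n -> bool} | bob_score x < alice_score x]| = count neg (allseq n).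
Proof.
rewrite -count_rev -card_link; apply: eq_card => x; rewrite !inE /alice_score /bob_score !pair_pc.
move: (pc_rev (rev (fw x))); rewrite revK /neg => -[].
move: (inv_ek (rev (fw x))) (inv_kh (rev (fw x))); lia.
Qed.

Local Open Scope ring_scope.

Theorem mainTheorem3 (n : nat) : (3 <= n)%N -> 0 < Delta n.
Proof.
move=> Hn; rewrite /Delta /P_bob /P_alice pos_link neg_link -mulrBl.
apply: divr_gt0; last by rewrite ltr0n expn_gt0.
by rewrite subr_gt0 ltr_nat seq_ineq.
Qed.
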